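(* Consider the mechanism MT-DM-L described in the context, run on any input (graph, tasks, diffusion parameters, qualities, registered users $V_R$ with bids $B_i=(T_i,b_i)$, budget $D$), with the marginal gains computed exactly from $f$. Then every winner $v_i\in S$ receives a payment $p_i\ge b_i$. Consequently MT-DM-L is individually rational: if a winning user bids truthfully ($b_i=c_i$, its true cost), its utility $u_i=p_i-c_i$ is nonnegative.
   Context: Setting: directed graph $G=(V,E)$; tasks $T=\{t_1,\dots,t_{n_T}\}$; for each $t_j$ edge probabilities $W^j=\{w^j_{uv}\}$; location map $\mathcal{L}:V\to\{a_1,\dots,a_{n_A}\}$; qualities $q_j^k\ge0$. Registered users $V_R\subseteq V$; user $v_i$ submits $B_i=(T_i,b_i)$ with $T_i\subseteq T$ and bid $b_i>0$, and has private true cost $c_i$. For $S\subseteq V_R$, $S^j=\{v_i\in S:t_j\in T_i\}$ and $f(S)=\frac{1}{n_T}\sum_{j}\sum_g\Pr[g;W^j]\sum_{v\in I_g(S^j)}q_j^{\mathcal{L}(v)}$, where $g$ ranges over realizations of $W^j$ (each edge kept independently with probability $w^j_{uv}$) and $I_g(A)$ is the set of nodes reachable from $A$ in $g$. Write $f(v|S)=f(S\cup\{v\})-f(S)$. Mechanism MT-DM-L. Winner selection: $S_0=\emptyset$, $sum=0$, $i=0$; while $S_i\ne V_R$: pick $v\in\arg\max_{v_k\in V_R\setminus S_i}f(v_k|S_i)/b_k$; if $sum+b_v>D$ stop; else $S_{i+1}=S_i\cup\{v\}$, $sum\mathrel{+}=b_v$, $i\mathrel{+}=1$. Output $S=S_i$.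 Payment for each $v_i\in S$: let $V_{R:-i}=V_R\setminus\{v_i\}$; set $H_0=\emptyset$, $sum=0$, $l=0$, $p_i=-\infty$; while $H_l\ne V_{R:-i}$: pick $v_{i_{l+1}}\in\arg\max_{v\in V_{R:-i}\setminus H_l}f(v|H_l)/b_v$; $H_{l+1}=H_l\cup\{v_{i_{l+1}}\}$; $sum\mathrel{+}=b_{i_{l+1}}$; $p_i\leftarrow\max\{p_i,\ b_{i_{l+1}}\cdot f(v_i|H_l)/f(v_{i_{l+1}}|H_l)\}$; $l\mathrel{+}=1$; if $sum+b_i>D$ stop the loop. After the loop, if $sum+b_i\le D$ set $p_i\leftarrow\max\{p_i,D-sum\}$. Utility of a winner is $u_i=p_i-c_i$; of a loser, $0$. *)

(* Defs.v *)
From mathcomp Require Import all_boot all_order all_algebra.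
Set Implicit Arguments. Unset Strict Implicit. Unset Printing Implicit Defensive.
Import Order.TTheory GRing.Theory Num.Theory.
Local Open Scope ring_scope.

Record mt_input (R : realFieldType) (V A : finType) (nT : nat) := MtInput {
  edge   : rel V;
  w      : 'I_nT -> V -> V -> R;
  loc    : V -> A;
  qual   : 'I_nT -> A -> R;
  VR     : {set V};
  tasks  : V -> {set 'I_nT};
  bid    : V -> R;
  budget : R
}.

Section MTDML.
Variables (R : realFieldType) (V A : finType) (nT : nat).
Variable I : mt_input R V A nT.

Definition Eset : {set V * V} := [set e | edge I e.1 e.2].

Definition prg (j : 'I_nT) (g : {set V * V}) : R :=
  \prod_(e in Eset) (if e \in g then w I j e.1 e.2 else 1 - w I j e.1 e.2).

Definition reach (g : {set V * V}) (S : {set V}) : {set V} :=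
  [set v | [exists u in S, connect (fun x y => (x, y) \in g) u v]].

Definition Sj (S : {set V}) (j : 'I_nT) : {set V} :=
  [set v in S | j \in tasks I v].

Definition f (S : {set V}) : R :=
  (nT%:R)^-1 * \sum_(j < nT) \sum_(g in powerset Eset)
     prg j g * \sum_(v in reach g (Sj S j)) qual I j (loc I v).

Definition marg (v : V) (S : {set V}) : R := f (v |: S) - f S.

(* argmax with a fixed deterministic tie-breaking rule: the first maximizer
   in the enumeration order of V *)
Definition pickmax (C : {set V}) (F : V -> R) : option V :=
  [pick v in C | [forall u in C, F u <= F v]].

(* winner selection loop (fuel #|VR| suffices: each step adds a user) *)
Fixpoint win_loop (n : nat) (S : {set V}) (sum : R) : {set V} :=
  match n with
  | 0 => S
  | n'.+1 =>
    if S == VR I then S else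
    match pickmax (VR I :\: S) (fun v => marg v S / bid I v) with
    | None => S
    | Some v => if sum + bid I v > budget I then S
                else win_loop n' (v |: S) (sum + bid I v)
    end
  end.

Definition winners : {set V} := win_loop #|VR I| set0 0.

(* payment loop for user vi: returns the executed steps (v_{i_{l+1}}, H_l)
   and the final value of sum *)
Fixpoint pay_loop (vi : V) (n : nat) (H : {set V}) (sum : R)
  : seq (V * {set V}) * R :=
  match n with
  | 0 => ([::], sum)
  | n'.+1 =>
    if H == VR I :\ vi then ([::], sum) else
    match pickmax ((VR I :\ vi) :\: H) (fun v => marg v H / bid I v) with
    | None => ([::], sum)
    | Some v =>
      let sum' := sum + bid I v in
      if sum' + bid I vi > budget I then ([:: (v, H)], sum')
      else let r := pay_loop vi n' (v |: H) sum' in ((v, H) :: r.1, r.2)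
    end
  end.

Definition pay_run (vi : V) := pay_loop vi #|VR I| set0 0.

(* max with -oo represented by None *)
Definition omax (x : R) (o : option R) : option R :=
  Some (match o with Some y => Num.max x y | None => x end).

Definition cand (vi : V) (st : V * {set V}) : R :=
  bid I st.1 * marg vi st.2 / marg st.1 st.2.

Definition payment (vi : V) : option R :=
  let r := pay_run vi in
  foldr (fun st acc => omax (cand vi st) acc)
        (if r.2 + bid I vi <= budget I then Some (budget I - r.2) else None)
        r.1.

(* the payment formula is well defined: every denominator
   f(v_{i_{l+1}} | H_l) occurring in the executed payment loop is nonzero *)
Definition pay_welldef (vi : V) : bool :=
  all (fun st : V * {set V} => marg st.1 st.2 != 0) (pay_run vi).1.

End MTDML.

(* Main.v *)
Require Import Defs.
From mathcomp Require Import all_boot all_order all_algebra.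
From mathcomp Require Import ring.
Set Implicit Arguments. Unset Strict Implicit. Unset Printing Implicit Defensive.
Import Order.TTheory GRing.Theory Num.Theory.
Local Open Scope ring_scope.

Lemma alg (R : realFieldType) (a c bv bi : R) : 0 < a -> 0 < bv -> 0 < bi ->
  a / bv <= c / bi -> bi <= bv * c / a.
Proof.
move=> ha hv hi h.
rewrite ler_pdivlMr // -(ler_pM2r hv) in h.
rewrite ler_pdivlMr //.
have e : a / bv * bi * bv = a * bi by field; rewrite gt_eqF.
have e2 : c / bi * bi = c by field; rewrite gt_eqF.
by rewrite e in h; rewrite mulrC [bv * c]mulrC.
Qed.

Section Aux.
Variables (R : realFieldType) (V A : finType) (nT : nat).
Variable I : mt_input R V A nT.
Hypothesis Hw : forall j u v, 0 <= w I j u v <= 1.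
Hypothesis Hq : forall j a, 0 <= qual I j a.

Lemma sum_subset (S T : {set V}) (F : V -> R) :
  (forall x, 0 <= F x) -> S \subset T -> \sum_(x in S) F x <= \sum_(x in T) F x.
Proof.
move=> F0 /subsetP ST; rewrite [X in X <= _]big_mkcond [X in _ <= X]big_mkcond /=.
apply: ler_sum => x _; case: ifP => xS; first by rewrite (ST _ xS).
by case: ifP.
Qed.

Lemma prg_ge0 j g : 0 <= prg I j g.
Proof.
apply: prodr_ge0 => e _; have /andP[h1 h2] := Hw j e.1 e.2.
by case: ifP => _ //; rewrite subr_ge0.
Qed.

Lemma reach_mono (g : {set V * V}) (S T : {set V}) : S \subset T -> reach g S \subset reach g T.
Proof.
move=> /subsetP ST; apply/subsetP => x; rewrite !inE => /existsP[u /andP[uS c]].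
by apply/existsP; exists u; rewrite (ST _ uS).
Qed.

Lemma f_mono (S T : {set V}) : S \subset T -> f I S <= f I T.
Proof.
move=> ST; rewrite /f; apply: ler_wpM2l; first by rewrite invr_ge0 ler0n.
apply: ler_sum => j _; apply: ler_sum => g _; apply: ler_wpM2l; first exact: prg_ge0.
apply: sum_subset => [x|]; first exact: Hq.
apply: reach_mono; apply/subsetP => x; rewrite !inE => /andP[xS ->].
by rewrite (subsetP ST _ xS).
Qed.

Lemma marg_ge0 v (S : {set V}) : 0 <= marg I v S.
Proof. by rewrite /marg subr_ge0; apply: f_mono; apply: subsetUr. Qed.

Lemma ohead_filter (T : eqType) (p1 p2 : pred T) (x v : T) s :
  (forall y, p2 y = (y != x) && p1 y) -> v != x ->
  ohead (filter p1 s) = Some v -> ohead (filter p2 s) = Some v.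
Proof.
move=> E vx; elim: s => [|y s IH] //=; rewrite E.
case: ifP => p1y /=.
  by case=> yv; rewrite -yv in vx *; rewrite vx.
by rewrite andbF.
Qed.

Lemma pickmax_del (C : {set V}) (F : V -> R) v x :
  pickmax C F = Some v -> v != x -> pickmax (C :\ x) F = Some v.
Proof.
move=> h vx; have vx0 := vx; have := h; rewrite /pickmax; case: pickP => // z Hy [] yv.
move: Hy; rewrite {}yv => /andP[vC /forallP vmax].
move: h; rewrite /pickmax /pick /enum_mem /=; apply: ohead_filter vx => y /=.
change ((y \in C :\ x) && [forall u in C :\ x, F u <= F y] = (y != x) && ((y \in C) && [forall u in C, F u <= F y])); rewrite !inE; apply/andP/andP.
  move=> [/andP[yx yC] /forallP ymax]; rewrite yx /= yC /=; split=> //.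
  apply/forallP => u; apply/implyP => uC.
  have := vmax u; rewrite uC /= => /le_trans; apply.
  by have := ymax v; rewrite !inE vx0 vC.
move=> [yx /andP[yC /forallP ymax]]; split; first by rewrite yx.
apply/forallP => u; apply/implyP; rewrite !inE => /andP[_ uC].
by have := ymax u; rewrite uC.
Qed.

Lemma pickmaxP (C : {set V}) (F : V -> R) v :
  pickmax C F = Some v -> v \in C /\ forall u, u \in C -> F u <= F v.
Proof.
rewrite /pickmax; case: pickP => // y /andP[yC /forallP ymax] [<-]; split=> // u uC.
by have := ymax u; rewrite uC.
Qed.

Hypothesis Hb : forall v, v \in VR I -> 0 < bid I v.

Definition pval vi (r : seq (V * {set V}) * R) :=
  foldr (fun st acc => omax (cand I vi st) acc)
        (if r.2 + bid I vi <= budget I then Some (budget I - r.2) else None) r.1.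

Lemma win_sum vi n (S : {set V}) sum :
  vi \notin S -> vi \in win_loop I n S sum -> sum + bid I vi <= budget I.
Proof.
elim: n S sum => [|n IH] S sum viS /=; first by rewrite (negPf viS).
case: (eqVneq S (VR I)) => [SE | SVR]; first by move: viS; rewrite SE => /negPf ->.
case Hp: pickmax => [v|]; last by rewrite (negPf viS).
have [vC _] := pickmaxP Hp.
have vVR : v \in VR I by move: vC; rewrite inE => /andP[].
case: ltP => [_|Hsum]; first by rewrite (negPf viS).
case: (eqVneq v vi) => [<- //| vvi] Hwin.
have viS' : vi \notin v |: S by rewrite !inE negb_or eq_sym vvi.
apply: le_trans (IH _ _ viS' Hwin); rewrite lerD2r lerDl; exact: ltW (Hb vVR).
Qed.

Lemma key vi n (S : {set V}) sum :
  vi \notin S -> vi \in win_loop I n S sum ->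
  all (fun st : V * {set V} => marg I st.1 st.2 != 0) (pay_loop I vi n S sum).1 ->
  sum + bid I vi <= budget I /\
  exists p, pval vi (pay_loop I vi n S sum) = Some p /\ bid I vi <= p.
Proof.
elim: n S sum => [|n IH] S sum viS /=; first by rewrite (negPf viS).
case: (eqVneq S (VR I)) => [SE | SVR]; first by move: viS; rewrite SE => /negPf ->.
case Hp: pickmax => [v|]; last by rewrite (negPf viS).
have [vC vmax] := pickmaxP Hp.
have vVR : v \in VR I by move: vC; rewrite inE => /andP[].
have vS : v \notin S by move: vC; rewrite inE => /andP[].
case: ltP => [_|Hsum]; first by rewrite (negPf viS).
have Cdel : (VR I :\ vi) :\: S = (VR I :\: S) :\ vi.
  by apply/setP => x; rewrite !inE andbCA.
case: (eqVneq v vi) => [vvi | vvi].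
  subst v => _; rewrite -/(pay_loop I vi n S sum); move=> H; split => //; move: H.
  case: (eqVneq S (VR I :\ vi)) => [_ _ | _]; first by exists (budget I - sum); rewrite /pval /= Hsum lerBrDl addrC.
  case Hp2: pickmax => [v'|]; last by move=> _; exists (budget I - sum); rewrite /pval /= Hsum lerBrDl addrC.
  have [v'C _] := pickmaxP Hp2.
  have v'C0 : v' \in VR I :\: S by move: v'C; rewrite Cdel inE => /andP[].
  have v'VR : v' \in VR I by move: v'C0; rewrite inE => /andP[].
  have hle := vmax _ v'C0.
  have hc : forall l base, all (fun st : V * {set V} => marg I st.1 st.2 != 0) ((v', S) :: l) ->
     exists p, foldr (fun st acc => omax (cand I vi st) acc) base ((v', S) :: l) = Some p /\ bid I vi <= p.
    move=> l base /andP[/= mne _].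
    have mpos : 0 < marg I v' S by rewrite lt_def mne marg_ge0.
    have bv := Hb v'VR; have bi := Hb vVR.
    have hcand : bid I vi <= cand I vi (v', S).
      by rewrite /cand /=; apply: alg.
    rewrite /=; case: (foldr _ _ l) => [y|].
      by eexists; split; first reflexivity; rewrite le_max hcand.
    by eexists; split; first reflexivity.
  case: ltP => _ Hall.
    by apply: hc.
  by apply: hc.
move=> Hwin.
have viS' : vi \notin v |: S by rewrite !inE negb_or eq_sym vvi.
have SVR' : S != VR I :\ vi.
  apply/eqP => E; move: vS; rewrite E !inE vvi vVR.
  done.
rewrite (negPf SVR') Cdel (pickmax_del Hp vvi).
have bv := Hb vVR.
case: ltP => Hst Hall.
  have Hs := win_sum viS' Hwin.
  by exfalso; move: Hst; rewrite ltNge Hs.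
have Hall' : all (fun st : V * {set V} => marg I st.1 st.2 != 0) (pay_loop I vi n (v |: S) (sum + bid I v)).1.
  by move: Hall => /andP[].
have [Hs [p [Hp' Hbp]]] := IH _ _ viS' Hwin Hall'.
split.
  apply: le_trans Hs; rewrite lerD2r lerDl; exact: ltW.
rewrite /pval /= in Hp' *; rewrite Hp' /=.
by eexists; split; first reflexivity; rewrite le_max Hbp orbT.
Qed.

End Aux.

Theorem lemma1 (R : realFieldType) (V A : finType) (nT : nat)
    (I : mt_input R V A nT) :
  (forall j u v, 0 <= w I j u v <= 1) ->
  (forall j a, 0 <= qual I j a) ->
  (forall v, v \in VR I -> 0 < bid I v) ->
  forall vi, vi \in winners I -> pay_welldef I vi ->
  exists p : R, payment I vi = Some p /\ bid I vi <= p /\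
    (forall c : R, bid I vi = c -> 0 <= p - c).
Proof.
move=> Hw Hq Hb vi Hwin Hwd.
have [_ [p [Hp Hbp]]] := @key R V A nT I Hw Hq Hb vi #|VR I| set0 0 (negbT (in_set0 vi)) Hwin Hwd.
exists p; split; first exact: Hp.
by split=> // c <-; rewrite subr_ge0.
Qed.
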